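(* Let $\mathbb{F}$ be a field and $\mathcal{H}=(Q_0,Q_1,\beta)$ a directed tensor-labeled hypergraph. Suppose there exist $r\ge1$, distinct elements $w_0,w_1,\dots,w_r\in V_{\mathrm{macro}}$ and distinct hyperedges $e_1,\dots,e_r\in Q_1$ with $\beta(\mathbf{1}_{e_i})=(w_0,w_i)$ for $i=1,\dots,r$. If there is $(\alpha_1,\dots,\alpha_r)\in\mathbb{F}^r\setminus\{0\}$ with $\sum_{i=1}^r\alpha_i(w_i-w_0)=0$ in $T(\mathbb{F}^{Q_0})$, then $\xi:=\sum_i\alpha_i\mathbf{1}_{e_i}$ satisfies $\partial_\beta(\xi)=0$ and $B_{\mathrm{macro}}(\xi)\in(\mathrm{Im}(B_{\mathrm{macro}})\cap\mathrm{Ker}(\hat\phi))\setminus\{0\}$. In particular $\delta(\mathcal{H})\ge1$.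
   Context: $T(\mathbb{F}^{Q_0})=\bigoplus_{k\ge0}(\mathbb{F}^{Q_0})^{\otimes k}$. A directed tensor-labeled hypergraph is $\mathcal{H}=(Q_0,Q_1,\beta)$ ($Q_0,Q_1$ finite) with $\beta:\mathbb{F}^{Q_1}\to T(\mathbb{F}^{Q_0})\times T(\mathbb{F}^{Q_0})$ linear, $\beta(\mathbf{1}_e)=(A_e,B_e)$. $\partial_\beta:\mathbf{1}_e\mapsto B_e-A_e$. $V_{\mathrm{macro}}=\{A_e\}\cup\{B_e\}$; $B_{\mathrm{macro}}:\mathbb{F}^{Q_1}\to\mathbb{F}^{V_{\mathrm{macro}}}$, $\mathbf{1}_e\mapsto\mathbf{1}_{B_e}-\mathbf{1}_{A_e}$; $\hat\phi:\mathbb{F}^{V_{\mathrm{macro}}}\to T(\mathbb{F}^{Q_0})$, $\mathbf{1}_w\mapsto w$; $\delta(\mathcal{H})=\dim(\mathrm{Im}B_{\mathrm{macro}}\cap\mathrm{Ker}\hat\phi)$. *)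

(* Defs.v *)
From HB Require Import structures.
From mathcomp Require Import all_boot all_order all_algebra.
From mathcomp Require Import finmap.
From mathcomp Require Import monalg.
From mathcomp Require Import boolp.

Set Implicit Arguments.
Unset Strict Implicit.
Unset Printing Implicit Defensive.

Import GRing.Theory.
Local Open Scope ring_scope.
Local Open Scope fset_scope.

(* T(F^{Q0}) = (+)_{k>=0} (F^{Q0})^{(x)k}, realized as the F-vector space
   with basis the words (seq Q0) over Q0:  the word [:: q1; ...; qk]
   stands for the basis tensor 1_{q1} (x) ... (x) 1_{qk}. *)
Definition tensor_alg (F : fieldType) (Q0 : finType) := {malg F[seq Q0]}.

Section Hypergraph.
Variables (F : fieldType) (Q0 Q1 : finType).
(* beta(1_e) = (A e, B e); beta is the linear extension. *)
Variables (A B : Q1 -> tensor_alg F Q0).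

Definition indic (e : Q1) : {ffun Q1 -> F} := [ffun q => (q == e)%:R].

Definition beta (xi : {ffun Q1 -> F}) : tensor_alg F Q0 * tensor_alg F Q0 :=
  (\sum_q xi q *: A q, \sum_q xi q *: B q).

Definition partial_beta (xi : {ffun Q1 -> F}) : tensor_alg F Q0 :=
  \sum_q xi q *: (B q - A q).

Definition Vmacro : {fset tensor_alg F Q0} :=
  [fset A e | e in Q1] `|` [fset B e | e in Q1].

Definition Bmacro (xi : {ffun Q1 -> F}) : {ffun Vmacro -> F} :=
  [ffun v : Vmacro => \sum_q xi q * ((val v == B q)%:R - (val v == A q)%:R)].

Definition phihat (f : {ffun Vmacro -> F}) : tensor_alg F Q0 :=
  \sum_(v : Vmacro) f v *: val v.

Definition in_Im_cap_Ker (f : {ffun Vmacro -> F}) : Prop :=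
  (exists xi, Bmacro xi = f) /\ phihat f = 0.

Definition lin_indep n (X : 'I_n -> {ffun Vmacro -> F}) : Prop :=
  forall c : 'I_n -> F,
    (forall v, \sum_i c i * X i v = 0) -> forall i, c i = 0.

(* delta(H) = dim (Im B_macro /\ Ker phi_hat): the maximal number of
   linearly independent vectors in that subspace of F^{V_macro}
   (which is at most #|V_macro|). *)
Definition delta : nat :=
  \max_(n < (#|` Vmacro|).+1 |
        `[< exists X : 'I_n -> {ffun Vmacro -> F},
              lin_indep X /\ forall i, in_Im_cap_Ker (X i) >]) n.
End Hypergraph.

(* Main.v *)
Require Import Defs.
From HB Require Import structures.
From mathcomp Require Import all_boot all_order all_algebra.
From mathcomp Require Import finmap monalg boolp.

Import GRing.Theory.
Local Open Scope ring_scope.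
Local Open Scope fset_scope.

Lemma sum_indic_scale (F : fieldType) (Q1 : finType) (V : lmodType F)
  (e0 : Q1) (f : Q1 -> V) : \sum_q indic F e0 q *: f q = f e0.
Proof.
rewrite (bigD1 e0) //= ffunE eqxx scale1r big1 ?addr0 // => q /negbTE hq.
by rewrite ffunE hq scale0r.
Qed.

Lemma sum_xi_scale (F : fieldType) (Q1 : finType) (V : lmodType F) r
  (alpha : 'I_r -> F) (e : 'I_r -> Q1) (f : Q1 -> V) :
  \sum_q [ffun q => \sum_i alpha i * indic F (e i) q] q *: f q
  = \sum_i alpha i *: f (e i).
Proof.
under eq_bigr => q _ do rewrite ffunE scaler_suml.
rewrite exchange_big /=; apply: eq_bigr => i _.
under eq_bigr => q _ do rewrite -scalerA.
by rewrite -scaler_sumr sum_indic_scale.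
Qed.

Lemma sum_eq_self (F : fieldType) (Q0 : finType) (S : {fset tensor_alg F Q0})
  (x : tensor_alg F Q0) (hx : x \in S) :
  \sum_(v : S) ((val v == x)%:R : F) *: val v = x.
Proof.
rewrite (bigD1 [` hx]) //= eqxx scale1r big1 ?addr0 // => v hv.
have -> : (val v == x) = false.
  apply/negbTE; apply: contra hv => /eqP h; apply/eqP/val_inj => /=; exact h.
by rewrite scale0r.
Qed.

Lemma phihat_Bmacro (F : fieldType) (Q0 Q1 : finType)
  (A B : Q1 -> tensor_alg F Q0) xi :
  phihat (Bmacro A B xi) = partial_beta A B xi.
Proof.
rewrite /phihat /partial_beta.
under eq_bigr => v _ do rewrite ffunE scaler_suml.
rewrite exchange_big /=; apply: eq_bigr => q _.
under eq_bigr => v _ do rewrite -scalerA scalerBl.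
rewrite -scaler_sumr sumrB.
have hA : A q \in Vmacro A B by rewrite /Vmacro inE; apply/orP; left; apply/imfsetP; exists q.
have hB : B q \in Vmacro A B by rewrite /Vmacro inE; apply/orP; right; apply/imfsetP; exists q.
by rewrite (@sum_eq_self _ _ _ _ hA) (@sum_eq_self _ _ _ _ hB).
Qed.

Theorem proposition4p7 (F : fieldType) (Q0 Q1 : finType)
    (A B : Q1 -> tensor_alg F Q0) (r : nat) (hr : (1 <= r)%N)
    (w : 'I_r.+1 -> tensor_alg F Q0) (e : 'I_r -> Q1)
    (hwV : forall j, w j \in Vmacro A B)
    (hw : injective w) (he : injective e)
    (hbeta : forall i, beta A B (indic F (e i)) = (w ord0, w (lift ord0 i)))
    (alpha : 'I_r -> F) (halpha : exists i, alpha i != 0)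
    (hrel : \sum_i alpha i *: (w (lift ord0 i) - w ord0) = 0) :
  let xi : {ffun Q1 -> F} := [ffun q => \sum_i alpha i * indic F (e i) q] in
  partial_beta A B xi = 0 /\
  in_Im_cap_Ker (Bmacro A B xi) /\ Bmacro A B xi != 0 /\
  (1 <= delta A B)%N.
Proof.
move=> xi.
have hAe i : A (e i) = w ord0.
  by have := hbeta i; rewrite /beta sum_indic_scale => -[].
have hBe i : B (e i) = w (lift ord0 i).
  by have := hbeta i; rewrite /beta sum_indic_scale sum_indic_scale => -[].
have hpb : partial_beta A B xi = 0.
  rewrite /partial_beta sum_xi_scale; rewrite -[RHS]hrel; apply: eq_bigr => i _.
  by rewrite hAe hBe.
have hIK : in_Im_cap_Ker (Bmacro A B xi).
  by split; [exists xi | rewrite phihat_Bmacro].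
have [i0 hi0] := halpha.
set v0 : Vmacro A B := [` hwV (lift ord0 i0)].
have hv0 : Bmacro A B xi v0 = alpha i0.
  rewrite ffunE (@sum_xi_scale _ _ F^o) /=.
  rewrite (bigD1 i0) //= hAe hBe eqxx.
  have -> : (w (lift ord0 i0) == w ord0) = false.
    apply/negbTE/eqP => /hw /eqP; by rewrite eq_sym (negbTE (neq_lift _ _)).
  rewrite subr0 /GRing.scale /= mulr1 big1 ?addr0 // => i hi.
  rewrite hAe hBe.
  have -> : (w (lift ord0 i0) == w (lift ord0 i)) = false.
    apply/negbTE/eqP => /hw /lift_inj h; by rewrite h eqxx in hi.
  have -> : (w (lift ord0 i0) == w ord0) = false.
    apply/negbTE/eqP => /hw /eqP; by rewrite eq_sym (negbTE (neq_lift _ _)).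
  by rewrite subrr /GRing.scale /= mulr0.
have hnz : Bmacro A B xi != 0.
  by apply/eqP => h; move: hi0; rewrite -hv0 h ffunE eqxx.
split=> //; split=> //; split=> //.
have hcard : (0 < #|` Vmacro A B|)%N.
  by rewrite cardfs_gt0; apply/fset0Pn; exists (w (lift ord0 i0)).
have h1 : (1 < (#|` Vmacro A B|).+1)%N by [].
apply: (@leq_trans (nat_of_ord (Ordinal h1))) => //.
apply: (leq_bigmax_cond (Ordinal h1)).
apply/asboolP; exists (fun _ => Bmacro A B xi); split=> // c hc i.
have := hc v0; rewrite big_ord1 hv0 => /eqP; rewrite mulf_eq0 (negbTE hi0) orbF.
by rewrite (ord1 i) => /eqP.
Qed.
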